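(* Let $G=(V,E)$ be an infinite, connected, locally finite graph (no self-loops) and let $v\in V$. Then the sequence $\big(\mathbb{P}_v(\tau_v=2t)\big)_{t\geq 1}$ is non-increasing in $t$.
   Context: $(X_t)$ is simple random walk on $G$ with $X_0=v$ and $\tau_v=\min\{t\geq 1:X_t=v\}$. *)

(* Defs.v *)
From HB Require Import structures.
From mathcomp Require Import all_boot all_order all_algebra.
Set Implicit Arguments. Unset Strict Implicit. Unset Printing Implicit Defensive.
Import Order.TTheory GRing.Theory Num.Theory.

(* A locally finite simple graph on a vertex type V : eqType is given by the
   finite list of neighbours nb x of each vertex x. *)
Definition adjn (V : eqType) (nb : V -> seq V) : rel V := fun x y => y \in nb x.

Definition simple_locfin_graph (V : eqType) (nb : V -> seq V) : Prop :=
  (forall x, uniq (nb x)) /\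
  (forall x, x \notin nb x) /\
  (forall x y, (y \in nb x) = (x \in nb y)).

Definition graph_connected (V : eqType) (nb : V -> seq V) : Prop :=
  forall x y : V, exists p : seq V, path (adjn nb) x p /\ last x p = y.

Definition infinite_type (V : eqType) : Prop :=
  forall s : seq V, exists x : V, x \notin s.

Local Open Scope ring_scope.

(* first_hit nb v n x = P_x( min{t >= 1 : X_t = v} = n ) for the simple random
   walk (uniform step to a neighbour), computed by first-step analysis:
   it is the sum over walks x = x_0, x_1, ..., x_n = v with x_i <> v for
   0 < i < n of prod_{i<n} 1/deg(x_i). *)
Fixpoint first_hit (V : eqType) (nb : V -> seq V) (v : V) (n : nat) (x : V)
  : rat :=
  match n with
  | 0 => 0
  | n'.+1 =>
      (\sum_(y <- nb x)
          (if n' is 0 then (y == v)%:R else (y != v)%:R * first_hit nb v n' y))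
        / (size (nb x))%:R
  end.

Definition return_prob (V : eqType) (nb : V -> seq V) (v : V) (n : nat) : rat :=
  first_hit nb v n v.

(* Main.v *)
Require Import Defs.
From HB Require Import structures.
From mathcomp Require Import all_boot all_order all_algebra.
From Stdlib Require Import Lia.
Set Implicit Arguments. Unset Strict Implicit. Unset Printing Implicit Defensive.
Import Order.TTheory GRing.Theory Num.Theory.
Local Open Scope ring_scope.

Lemma sum_sub (V : eqType) (s L : seq V) (F : V -> rat) :
  uniq s -> uniq L -> (forall y, y \in s -> F y != 0 -> y \in L) ->
  \sum_(y <- s) F y = \sum_(y <- L) (y \in s)%:R * F y.
Proof.
move=> us uL hF.
rewrite (bigID (mem L)) /= [X in _ + X]big1_seq ?addr0; last first.
  move=> y /andP[/negP hy ys]; apply/eqP; apply/negPn/negP => hn.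
  by apply: hy; apply: hF.
rewrite -big_filter.
transitivity (\sum_(y <- L | y \in s) F y); last first.
  by rewrite big_mkcond /=; apply: eq_bigr => y _; case: (y \in s); rewrite ?mul1r ?mul0r.
rewrite -[RHS]big_filter; apply: perm_big; apply: uniq_perm; rewrite ?filter_uniq //.
by move=> y; rewrite !mem_filter andbC.
Qed.

Section S.
Variables (V : eqType) (nb : V -> seq V) (v : V).
Hypothesis nb_uniq : forall x, uniq (nb x).
Hypothesis nb_sym : forall x y, (y \in nb x) = (x \in nb y).
Hypothesis nb_loop : forall x, x \notin nb x.

Lemma swap (L : seq V) (F : V -> V -> rat) : uniq L ->
 (forall x y, x \in L -> y \in nb x -> F x y != 0 -> y \in L) ->
 (forall x y, y \in L -> x \in nb y -> F x y != 0 -> x \in L) ->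
 \sum_(x <- L) \sum_(y <- nb x) F x y = \sum_(y <- L) \sum_(x <- nb y) F x y.
Proof.
move=> uL h1 h2.
transitivity (\sum_(x <- L) \sum_(y <- L) (y \in nb x)%:R * F x y).
  rewrite big_seq [RHS]big_seq; apply: eq_bigr => x xL; apply: sum_sub => // y.
  exact: h1.
transitivity (\sum_(y <- L) \sum_(x <- L) (x \in nb y)%:R * F x y); last first.
  rewrite big_seq [RHS]big_seq; apply: eq_bigr => y yL.
  by rewrite (sum_sub (L:=L) (F:=fun x => F x y)) // => x; apply: h2.
rewrite exchange_big /=; apply: eq_bigr => y _; apply: eq_bigr => x _.
by rewrite nb_sym.
Qed.

Fixpoint ball (k : nat) : seq V :=
  if k is k'.+1 then undup (ball k' ++ flatten (map nb (ball k'))) else [:: v].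

Lemma ball_uniq k : uniq (ball k).
Proof. by case: k => [|k] //=; exact: undup_uniq. Qed.

Lemma ballS k x : x \in ball k -> x \in ball k.+1.
Proof. by move=> h /=; rewrite mem_undup mem_cat h. Qed.

Lemma ball_nb k x y : x \in ball k -> y \in nb x -> y \in ball k.+1.
Proof.
move=> hx hy /=; rewrite mem_undup mem_cat; apply/orP; right.
by apply/flatten_mapP; exists x.
Qed.

Lemma ball_mono k j x : (k <= j)%N -> x \in ball k -> x \in ball j.
Proof.
move=> /subnKC <-; elim: (j - k)%N => [|i IH] h; first by rewrite addn0.
by rewrite addnS; apply: ballS; apply: IH.
Qed.

Definition deg x : rat := (size (nb x))%:R.
Definition ind x : rat := (x != v)%:R.
Definition Qop (f : V -> rat) x := (\sum_(y <- nb x) (y != v)%:R * f y) / deg x.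
Definition ip L (f g : V -> rat) := \sum_(x <- L) ind x * deg x * f x * g x.
Definition supp (f : V -> rat) r := forall x, f x != 0 -> x \in ball r.

Lemma deg_div x (F : V -> rat) : deg x * ((\sum_(y <- nb x) F y) / deg x) = \sum_(y <- nb x) F y.
Proof.
rewrite /deg; case E: (nb x) => [|a s]; first by rewrite big_nil !mul0r.
by rewrite mulrC divfK // pnatr_eq0.
Qed.

Lemma suppQ f r : supp f r -> supp (Qop f) r.+1.
Proof.
move=> hf x; apply: contraR => hx; rewrite /Qop big1_seq ?mul0r // => y /andP[_ yn].
suff -> : f y = 0 by rewrite mulr0.
apply/eqP; apply: contraR hx => /hf hy; apply: ball_nb hy _; by rewrite -nb_sym.
Qed.

Lemma supp_iter a f r : supp f r -> supp (iter a Qop f) (r + a).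
Proof.
elim: a => [|a IH] hf; first by rewrite addn0.
by rewrite addnS /=; apply: suppQ; apply: IH.
Qed.

Lemma ipE L f g : ip L (Qop f) g =
  \sum_(x <- L) \sum_(y <- nb x) ind x * ind y * f y * g x.
Proof.
rewrite /ip; apply: eq_bigr => x _.
rewrite -(mulrA (ind x)) deg_div mulr_sumr mulr_suml; apply: eq_bigr => y _.
by rewrite /ind !mulrA.
Qed.

Lemma ipC L f g : ip L f g = ip L g f.
Proof. by apply: eq_bigr => x _; rewrite mulrAC. Qed.

Lemma ipQ R f g r1 r2 : supp f r1 -> supp g r2 -> (r1 <= R)%N -> (r2 <= R)%N ->
  ip (ball R) (Qop f) g = ip (ball R) f (Qop g).
Proof.
move=> hf hg h1 h2.
rewrite [RHS]ipC !ipE swap //; last 3 first.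
- exact: ball_uniq.
- move=> x y _ _; rewrite !mulf_eq0 !negb_or => /andP[/andP[_ /hf hy] _].
  exact: ball_mono hy.
- move=> x y _ _; rewrite !mulf_eq0 !negb_or => /andP[_ /hg hy].
  exact: ball_mono hy.
apply: eq_bigr => y _; apply: eq_bigr => x _.
by rewrite (mulrC (ind x)) -!mulrA (mulrC (f y)).
Qed.

Lemma ipQn a R f g r1 r2 : supp f r1 -> supp g r2 -> (r1 + a <= R)%N -> (r2 + a <= R)%N ->
  ip (ball R) (iter a Qop f) g = ip (ball R) f (iter a Qop g).
Proof.
elim: a g r2 => [|a IH] g r2 hf hg h1 h2 //.
have s1 : supp (iter a Qop f) (r1 + a) by exact: supp_iter.
have l1 : (r1 + a <= R)%N by apply: leq_trans h1; rewrite leq_add2l.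
have l2 : (r2 <= R)%N by apply: leq_trans h2; apply: leq_addr.
rewrite [iter a.+1 Qop f]/= (ipQ s1 hg l1 l2).
rewrite (IH _ r2.+1) ?iterSr //; first exact: suppQ.
by rewrite addSnnS.
Qed.

Lemma ind_ge0 x : 0 <= ind x. Proof. exact: ler0n. Qed.

Lemma sum_const_seq (s : seq V) (c : rat) : \sum_(x <- s) c = (size s)%:R * c.
Proof.
elim: s => [|a s IH]; first by rewrite big_nil mul0r.
by rewrite big_cons IH /= -addn1 natrD mulrDl mul1r addrC.
Qed.

Lemma point_ineq f x : deg x * Qop f x * Qop f x <= \sum_(y <- nb x) ind y * (f y * f y).
Proof.
set q := Qop f x.
have hN : deg x * q = \sum_(y <- nb x) ind y * f y by rewrite /q /Qop deg_div.
have e1 : deg x * q * q = \sum_(y <- nb x) ind y * (f y * q).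
  by rewrite hN mulr_suml; apply: eq_bigr => y _; rewrite mulrA.
have i1 : (\sum_(y <- nb x) ind y * (f y * q)) *+ 2 <=
          \sum_(y <- nb x) ind y * (q * q + f y * f y).
  rewrite -sumrMnl; apply: ler_sum => y _.
  rewrite -mulrnAr; apply: ler_wpM2l; first exact: ind_ge0.
  rewrite -subr_ge0.
  have := sqr_ge0 (q - f y); rewrite sqrrB expr2 expr2.
  by move=> h; rewrite addrAC (mulrC (f y)).
have i2 : \sum_(y <- nb x) ind y * (q * q) <= deg x * q * q.
  rewrite -mulrA -sum_const_seq; apply: ler_sum => y _.
  rewrite -[leRHS]mul1r; apply: ler_wpM2r; first by rewrite -expr2 sqr_ge0.
  by rewrite /ind; case: (y != v).
have key : (deg x * q * q) *+ 2 <= deg x * q * q + \sum_(y <- nb x) ind y * (f y * f y).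
  rewrite {1}e1; apply: le_trans i1 _.
  rewrite (eq_bigr (fun y => ind y * (q * q) + ind y * (f y * f y))); last first.
    by move=> y _; rewrite mulrDr.
  by rewrite big_split /= lerD2r.
by move: key; rewrite mulr2n lerD2l.
Qed.

Lemma ipQQ R f r : supp f r -> (r.+1 <= R)%N ->
  ip (ball R) (Qop f) (Qop f) <= ip (ball R) f f.
Proof.
move=> hf hR.
apply: le_trans (_ : \sum_(x <- ball R) \sum_(y <- nb x) ind x * (ind y * (f y * f y)) <= _).
  rewrite /ip; apply: ler_sum => x _; rewrite -mulr_sumr -!(mulrA (ind x)).
  apply: ler_wpM2l; first exact: ind_ge0.
  exact: point_ineq.
rewrite swap //; last 3 first.
- exact: ball_uniq.
- move=> x y _ _; rewrite !mulf_eq0 !negb_or => /andP[_ /andP[_ /andP[/hf hy _]]].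
  by apply: ball_mono hy; apply: ltnW.
- move=> x y _ hx; rewrite !mulf_eq0 !negb_or => /andP[_ /andP[_ /andP[/hf hy _]]].
  by apply: ball_mono (ball_nb hy _) => //; rewrite -nb_sym.
rewrite /ip; apply: ler_sum => y _.
apply: le_trans (_ : \sum_(x <- nb y) ind y * (f y * f y) <= _).
  apply: ler_sum => x _; rewrite -[leRHS]mul1r; apply: ler_wpM2r.
    by apply: mulr_ge0; [exact: ind_ge0 | rewrite -expr2 sqr_ge0].
  by rewrite /ind; case: (x != v).
by rewrite sum_const_seq /deg mulrCA !mulrA.
Qed.

Lemma sum_eqv (s : seq V) : uniq s -> \sum_(y <- s) (y == v)%:R = (v \in s)%:R :> rat.
Proof.
elim: s => [|a s IH]; first by rewrite big_nil.
rewrite /= big_cons => /andP[ha us]; rewrite IH // in_cons.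
case: (eqVneq a v) => [e|ne].
  by move: ha; rewrite e => /negbTE ->; rewrite addr0.
by rewrite add0r.
Qed.

Definition g0 x := first_hit nb v 1 x.

Lemma supp_g0 : supp g0 1.
Proof.
move=> x; rewrite /g0 /= sum_eqv //.
case hv: (v \in nb x); last by rewrite mul0r eqxx.
move=> _; apply: (@ball_nb 0 v) => //; first by rewrite inE.
by rewrite -nb_sym.
Qed.

Lemma fh_iter m x : first_hit nb v m.+1 x = iter m Qop g0 x.
Proof.
elim: m x => [|m IH] x //.
transitivity (Qop (first_hit nb v m.+1) x); first by [].
rewrite iterS /Qop.
by congr (_ / _); apply: eq_bigr => y _; rewrite IH.
Qed.

Lemma T_ip R m : (1 <= R)%N -> supp (iter m Qop g0) (1 + m) -> (1 + m <= R)%N ->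
  \sum_(y <- nb v) (y != v)%:R * iter m Qop g0 y = ip (ball R) g0 (iter m Qop g0).
Proof.
move=> hR hs hm.
rewrite (sum_sub (L := ball R)) //; last 2 first.
- exact: ball_uniq.
- move=> y yv _; apply: (@ball_mono 1) => //.
  by apply: (@ball_nb 0 v) => //; rewrite inE.
rewrite /ip; apply: eq_bigr => x _.
rewrite -(mulrA (ind x)) /g0 /= deg_div sum_eqv // -nb_sym /ind.
by rewrite mulrA (mulrC (v \in nb x)%:R).
Qed.

End S.

Theorem corollary2p3 (V : eqType) (nb : V -> seq V) (v : V) :
  simple_locfin_graph nb -> graph_connected nb -> infinite_type V ->
  forall t : nat, (1 <= t)%N ->
    return_prob nb v (2 * t.+1) <= return_prob nb v (2 * t).
Proof.
move=> [hu [hl hs]] _ _ t.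
case: t => [|s] // _.
set R := (2 * s + 4)%N.
have sg := supp_g0 (v := v) hu hs.
have si a : supp nb v (iter a (Qop nb v) (g0 nb v)) (1 + a) := supp_iter hs sg.
have E1 : (2 * s.+2)%N = ((2*s+2).+1).+1 by rewrite -?multE -?plusE; lia.
have E2 : (2 * s.+1)%N = ((2*s).+1).+1 by rewrite -?multE -?plusE; lia.
rewrite /return_prob E1 E2 !fh_iter !iterS /Qop.
apply: ler_wpM2r; first by rewrite invr_ge0 ler0n.
have L0 : (0 < R)%N by rewrite /R addn4.
have L1 : (1 + 2 * s <= R)%N by apply/ssrnat.leP; rewrite /R -?multE -?plusE; lia.
have L2 : (1 + (2 * s + 2) <= R)%N by apply/ssrnat.leP; rewrite /R -?multE -?plusE; lia.
have L3 : (1 + s.+1 <= R)%N by apply/ssrnat.leP; rewrite /R -?multE -?plusE; lia.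
have L4 : (1 + s.+1 + s.+1 <= R)%N by apply/ssrnat.leP; rewrite /R -?multE -?plusE; lia.
have L5 : (1 + s <= R)%N by apply/ssrnat.leP; rewrite /R -?multE -?plusE; lia.
have L6 : (1 + s + s <= R)%N by apply/ssrnat.leP; rewrite /R -?multE -?plusE; lia.
have L7 : (1 + s < R)%N by apply/ssrnat.leP; rewrite /R -?multE -?plusE; lia.
rewrite (T_ip hu hs L0 (si _) L1) (T_ip hu hs L0 (si _) L2).
have A : ip nb v (ball nb v R) (g0 nb v) (iter (2 * s + 2) (Qop nb v) (g0 nb v)) =
         ip nb v (ball nb v R) (Qop nb v (iter s (Qop nb v) (g0 nb v)))
                               (Qop nb v (iter s (Qop nb v) (g0 nb v))).
  rewrite (_ : (2 * s + 2 = s.+1 + s.+1)%N); last by rewrite -?multE -?plusE; lia.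
  by rewrite iterD -(ipQn hu hs sg (si s.+1) L3 L4).
have B : ip nb v (ball nb v R) (g0 nb v) (iter (2 * s) (Qop nb v) (g0 nb v)) =
         ip nb v (ball nb v R) (iter s (Qop nb v) (g0 nb v)) (iter s (Qop nb v) (g0 nb v)).
  rewrite (_ : (2 * s = s + s)%N); last by rewrite -?multE -?plusE; lia.
  by rewrite iterD -(ipQn hu hs sg (si s) L5 L6).
rewrite A B; exact: (ipQQ hu hs (si s) L7).
Qed.
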